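(* Let $m\ge2$ and let $W$ be as in the context. Suppose the nonzero eigenvalues of $W$ (counted with algebraic multiplicity) are $\pm i\lambda_1,\dots,\pm i\lambda_r$ with $\lambda_k>0$ (the eigenvalue $0$ then having multiplicity $d-2r$). Then $$\sqrt{\det\mathcal{O}_{m-1}}=m^{\frac d2-r}\prod_{k=1}^r\frac{(1+\lambda_k)^m-(1-\lambda_k)^m}{2\lambda_k}.$$
   Context: $\mathbb{B}_n$ carries the Riemannian metric $\mathring b$ induced by the Bergman Hermitian metric, the standard complex structure $J$, and $\omega_p(\xi,\nu)=\mathring b_p(\xi,J\nu)$. $\Gamma\subseteq\mathbb{B}_n$ is an embedded submanifold of dimension $d$ with inclusion $\iota$, $\gamma:B(0,1)\subset\mathbb{R}^d\to\Gamma$ a parametrization with $p=\gamma(t)$, $G=(g_{jk}(p))$ with $g_{jk}(p)=\mathring b_p(D_p\iota\,\partial_{t_j},D_p\iota\,\partial_{t_k})$ and $H=(h_{jk}(p))$ with $h_{jk}(p)=\omega_p(D_p\iota\,\partial_{t_j},D_p\iota\,\partial_{t_k})$, and $W=G^{-1}H$ (a $d\times d$ real matrix, skew-adjoint with respect to $G$, so its nonzero eigenvalues are purely imaginary in conjugate pairs). $\mathcal{O}_{m-1}$ is the $(m-1)d\times(m-1)d$ complex matrix which, as an $(m-1)\times(m-1)$ block matrix with $d\times d$ blocks, is block tridiagonal with diagonal blocks $2I$, superdiagonal blocks $-I-iW$, subdiagonal blocks $-I+iW$, and all other blocks zero. The square root is the positive one. *)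

(* Defs.v *)
From HB Require Import structures.
From mathcomp Require Import all_boot all_order all_algebra.
From mathcomp Require Import complex.
Set Implicit Arguments. Unset Strict Implicit. Unset Printing Implicit Defensive.
Import Order.TTheory GRing.Theory Num.Theory.
Local Open Scope ring_scope.

Definition cmx (R : rcfType) (p q : nat) (A : 'M[R]_(p, q)) : 'M[R[i]]_(p, q) :=
  map_mx (fun x : R => (x%:C)%C) A.

Definition Omx (R : rcfType) (d m : nat) (W : 'M[R]_d)
  : 'M[R[i]]_(\sum_(k < m.-1) d) :=
  \mxblock_(a < m.-1, b < m.-1)
    (if (b : nat) == a then 2%:M
     else if (b : nat) == a.+1 then - 1%:M - ('i)%C *: cmx W
     else if (a : nat) == b.+1 then - 1%:M + ('i)%C *: cmx W
     else (0 : 'M[R[i]]_d)).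

(* Main.v *)
Require Import Defs.
From HB Require Import structures.
From mathcomp Require Import all_boot all_order all_algebra.
From mathcomp Require Import complex fingroup perm ring.
Set Implicit Arguments. Unset Strict Implicit. Unset Printing Implicit Defensive.
Import Order.TTheory GRing.Theory Num.Theory.
Local Open Scope ring_scope.

Lemma prod_const_ord (K : comNzRingType) n (x : K) : \prod_(i < n) x = x ^+ n.
Proof. by elim: n => [|n IH]; rewrite ?big_ord0 ?big_ord_recr ?IH ?exprSr. Qed.

Section Gen.
Variable K : comNzRingType.

Lemma det_castmx2 m n (e1 e2 : m = n) (A : 'M[K]_m) :
  \det (castmx (e1, e2) A) = \det A.
Proof. rewrite (eq_irrelevance e2 e1); case: n / e1 e2 => e2; by rewrite castmx_id. Qed.

Lemma det_size0 k (A : 'M[K]_k) : k = 0%N -> \det A = 1.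
Proof. move=> e; subst k; exact: det_mx00. Qed.

Lemma det_reindex N1 N2 (f : 'I_N2 -> 'I_N1) (A : 'M[K]_N1) :
  injective f -> N1 = N2 ->
  \det (\matrix_(x, y) A (f x) (f y)) = \det A.
Proof.
move=> finj e; subst N2.
pose s := perm finj.
have -> : \matrix_(x, y) A (f x) (f y) = row_perm s (col_perm s A).
  by apply/matrixP => x y; rewrite !mxE !permE.
rewrite row_permE col_permE !det_mulmx !det_perm odd_permV.
by rewrite mulrCA -signr_addb addbb expr0 mulr1.
Qed.

Lemma det_mxblock_trig p (pp : 'I_p -> nat) (B : forall i j, 'M[K]_(pp i, pp j)) :
  (forall i j : 'I_p, (i < j)%N -> B i j = 0) ->
  \det (\mxblock_(i, j) B i j) = \prod_i \det (B i i).
Proof.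
elim: p pp B => [|p IH] pp B Bz.
  have -> : \prod_(i < 0) \det (B i i) = 1 by rewrite big_ord0.
  by apply: det_size0; rewrite big_ord0.
rewrite mxblock_recul det_castmx2.
have -> : \mxrow_j B ord0 (lift ord0 j) = 0.
  by rewrite -(@mxrow0 _ _ (fun j => pp (lift ord0 j))); apply: eq_mxrow => j; rewrite Bz.
rewrite det_lblock IH ?big_ord_recl //.
by move=> i j lij; apply: Bz.
Qed.


Lemma det_mxblock_swap n d (F : 'I_n -> 'I_n -> 'M[K]_d) :
  \det (\mxblock_(a < n, b < n) F a b) =
  \det (\mxblock_(i < d, j < d) (\matrix_(a < n, b < n) F a b i j)).
Proof.
pose f (x : 'I_(\sum_(i < d) n)) : 'I_(\sum_(a < n) d) :=
  @tagnat.Rank n (fun _ => d) (@tagnat.sig2 d (fun _ => n) x) (tagnat.sig1 x).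
have s1 (a : 'I_n) (i : 'I_d) : @tagnat.sig1 n (fun _ => d) (@tagnat.Rank n (fun _ => d) a i) = a.
  exact: tagnat.Rank1K.
have s2 (a : 'I_n) (i : 'I_d) : @tagnat.sig2 n (fun _ => d) (@tagnat.Rank n (fun _ => d) a i) = i.
  by apply: val_inj; rewrite tagnat.Rank2K.
rewrite -(@det_reindex _ _ f).
- congr (\det _); apply/matrixP => x y; by rewrite !mxE /f !s2 !s1.
- move=> x y /(congr1 (fun z => (@tagnat.sig1 n (fun _ => d) z, @tagnat.sig2 n (fun _ => d) z))).
  rewrite /f !s1 !s2 => -[e1 e2].
  rewrite -[x]tagnat.sig2K -[y]tagnat.sig2K; apply/val_inj/eqP.
  by rewrite tagnat.eq_Rank e2 e1 !eqxx.
- by rewrite !big_const_ord !iter_addn_0 mulnC.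
Qed.

Definition tri k (al be ga : K) : 'M[K]_k :=
  \matrix_(a < k, b < k) (if (b : nat) == a then al else if (b : nat) == a.+1 then be
     else if (a : nat) == b.+1 then ga else 0).

Lemma tri_rec k al be ga :
  \det (tri k.+2 al be ga) = al * \det (tri k.+1 al be ga) - be * ga * \det (tri k al be ga).
Proof.
rewrite (expand_det_row _ ord0) !big_ord_recl big1 ?addr0; last first.
  by move=> i _; rewrite !mxE /= /bump /= mul0r.
rewrite /cofactor.
have -> : row' ord0 (col' ord0 (tri k.+2 al be ga)) = tri k.+1 al be ga.
  by apply/matrixP => a b; rewrite !mxE /= /bump /=.
rewrite !mxE /= expr0 mul1r.
set N := row' ord0 (col' (lift ord0 ord0) (tri k.+2 al be ga)).
rewrite (expand_det_col N ord0) big_ord_recl big1 ?addr0; last first.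
  by move=> i _; rewrite !mxE /= /bump /= mul0r.
rewrite /cofactor.
have -> : row' ord0 (col' ord0 N) = tri k al be ga.
  by apply/matrixP => a b; rewrite !mxE /= /bump /= !add1n !eqSS.
rewrite !mxE /= /bump /= !addn0 add0n expr0 expr1 !mul1r mulN1r.
by rewrite mulrN mulrA.
Qed.

Fixpoint Hs (u v : K) k : K := if k is k'.+1 then v * Hs u v k' + u ^+ k'.+1 else 1.

Lemma det_tri u v be ga k : be * ga = u * v -> \det (tri k (u + v) be ga) = Hs u v k.
Proof.
move=> bg.
suff: \det (tri k (u + v) be ga) = Hs u v k /\ \det (tri k.+1 (u + v) be ga) = Hs u v k.+1 by case.
elim: k => [|k [IH1 IH2]].
  by rewrite det_mx00 det_mx11 !mxE /= mulr1 expr1 addrC.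
split=> //; rewrite tri_rec IH1 IH2 bg /= !exprS; ring.
Qed.

Lemma Hs_closed u v k : (v - u) * Hs u v k = v ^+ k.+1 - u ^+ k.+1.
Proof.
elim: k => [|k IH] /=; first by rewrite mulr1 !expr1.
rewrite mulrDr mulrA [(v - u) * v]mulrC -mulrA IH !exprS; ring.
Qed.

Lemma Hs11 k : Hs 1 1 k = k.+1%:R.
Proof. elim: k => [|k IH] /=; first by rewrite mulr1n. by rewrite IH expr1n mul1r [in RHS]mulrS addrC. Qed.

End Gen.

Section F.
Variable K : fieldType.
Lemma char_poly_conj n (P A : 'M[K]_n) : P \in unitmx ->
  char_poly (P *m A *m invmx P) = char_poly A.
Proof.
move=> Pu.
pose Pp := map_mx (@polyC K) P; pose Pi := map_mx (@polyC K) (invmx P).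
have PPi : Pp *m Pi = 1%:M by rewrite /Pp /Pi -map_mxM mulmxV // map_mx1.
rewrite /char_poly.
have -> : char_poly_mx (P *m A *m invmx P) = Pp *m char_poly_mx A *m Pi.
  rewrite /char_poly_mx mulmxBr mulmxBl mul_mx_scalar -scalemxAl PPi scalemx1.
  by rewrite !map_mxM.
by rewrite !det_mulmx mulrAC -det_mulmx PPi det1 mul1r.
Qed.

End F.

Lemma Hs_rmorph (K K' : comNzRingType) (f : {rmorphism K -> K'}) u v k :
  f (Hs u v k) = Hs (f u) (f v) k.
Proof.
elim: k => [|k IH] /=; first exact: rmorph1.
by rewrite rmorphD rmorphM IH rmorphXn.
Qed.


Unset Implicit Arguments.

Theorem mainTheorem16 (R : rcfType) (d m r : nat) (G H W : 'M[R]_d)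
    (lambda : 'I_r -> R) :
  (2 <= m)%N ->
  G^T = G ->
  (forall v : 'rV[R]_d, v != 0 -> 0 < (v *m G *m v^T) 0 0) ->
  H^T = - H ->
  W = invmx G *m H ->
  (forall k, 0 < lambda k) ->
  char_poly (cmx W) =
    'X^(d - 2 * r) *
    \prod_(k < r) (('X - ((lambda k) *i)%C%:P) * ('X + ((lambda k) *i)%C%:P)) ->
  sqrtC (\det (Omx m W)) =
    ((Num.sqrt (m%:R : R)) ^+ (d - 2 * r) *
     \prod_(k < r) (((1 + lambda k) ^+ m - (1 - lambda k) ^+ m) / (2 * lambda k)))%:C%C.
Proof.
move=> m2 _ _ _ _ lpos hchar.
set C := cmx W.
have [P Pu Ptrig] : exists2 P : 'M[R[i]]_d, P \in unitmx & is_trig_mx (P *m C *m invmx P).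
  case: (posnP d) => [d0|dpos].
    exists 1%:M; first exact: unitmx1.
    by apply/is_trig_mxP => i; exfalso; have := ltn_ord i; rewrite {2}d0.
  have [Q Qu Qt] := Schur C dpos.
  exists Q; first exact: unitarymx_unit.
  by rewrite -conjumx // (unitarymx_unit Qu).
move: Ptrig; move Te : (P *m C *m invmx P) => T Ptrig.
pose h (t : R[i]) := Hs (1 + 'i%C * t) (1 - 'i%C * t) m.-1.
have detO : \det (Omx m W) = \prod_(i < d) h (T i i).
  have QQ : \mxdiag_(a < m.-1) P *m \mxdiag_(a < m.-1) invmx P = 1%:M.
    rewrite {1}/mxdiag mul_mxblock_mxdiag -(mxdiagZ (p_ := fun _ : 'I_m.-1 => d)) /mxdiag.
    by apply: eq_mxblock => a b; case: (a == b); rewrite ?conform_mx_id ?mulmxV ?mul0mx.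
  have -> : \det (Omx m W) = \det (\mxdiag_(a < m.-1) P *m Omx m W *m \mxdiag_(a < m.-1) invmx P).
    by rewrite !det_mulmx mulrAC -det_mulmx QQ det1 mul1r.
  have cS (c : R[i]) : P *m c%:M *m invmx P = c%:M.
    by rewrite mul_mx_scalar -scalemxAl mulmxV // scalemx1.
  have cW (e : R[i]) : P *m (e *: cmx W) *m invmx P = e *: T.
    by rewrite -scalemxAr -scalemxAl Te.
  have E (a b : 'I_m.-1) : P *m (if (b : nat) == a then 2%:M
     else if (b : nat) == a.+1 then - 1%:M - ('i)%C *: cmx W
     else if (a : nat) == b.+1 then - 1%:M + ('i)%C *: cmx W
     else (0 : 'M[R[i]]_d)) *m invmx P = (if (b : nat) == a then 2%:M
     else if (b : nat) == a.+1 then - 1%:M - ('i)%C *: T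
     else if (a : nat) == b.+1 then - 1%:M + ('i)%C *: T
     else (0 : 'M[R[i]]_d)).
    case: ifP => _; first exact: cS.
    case: ifP => _; first by rewrite mulmxBr mulmxBl mulmxN mulNmx cS cW.
    case: ifP => _; first by rewrite mulmxDr mulmxDl mulmxN mulNmx cS cW.
    by rewrite mulmx0 mul0mx.
  rewrite /Omx mul_mxdiag_mxblock mul_mxblock_mxdiag det_mxblock_swap det_mxblock_trig.
    apply: eq_bigr => i _; rewrite /h.
    under eq_mx do rewrite E.
    set t := T i i.
    have -> : \matrix_(a < m.-1, b < m.-1) (if (b : nat) == a then 2%:M
     else if (b : nat) == a.+1 then - 1%:M - ('i)%C *: T
     else if (a : nat) == b.+1 then - 1%:M + ('i)%C *: T
     else (0 : 'M[R[i]]_d)) i i = tri m.-1 ((1 + 'i%C * t) + (1 - 'i%C * t))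
          (- 1 - 'i%C * t) (- 1 + 'i%C * t).
      apply/matrixP => a b; rewrite !mxE.
      case: ifP => _; first by rewrite !mxE eqxx mulr1n; ring.
      case: ifP => _; first by rewrite !mxE eqxx mulr1n.
      by case: ifP => _; rewrite !mxE ?eqxx ?mulr1n.
    by apply: det_tri; ring.
  move=> i j lij; apply/matrixP => a b; rewrite mxE E !mxE.
  have Tz : T i j = 0 by move/is_trig_mxP: Ptrig; apply.
  have nij : (i == j) = false by apply/negbTE; rewrite neq_ltn lij.
  case: ifP => _; first by rewrite mxE nij mulr0n.
  case: ifP => _; first by rewrite !mxE nij Tz mulr0n mulr0 subr0 oppr0.
  by case: ifP => _; rewrite ?mxE ?nij ?Tz ?mulr0n ?mulr0 ?addr0 ?oppr0.
have hcharT : \prod_(i < d) ('X - (T i i)%:P) = char_poly C.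
  by rewrite -char_poly_trig // -Te char_poly_conj.
pose s0 := [seq (0 : R[i]) | _ <- index_enum 'I_(d - 2 * r)] ++
   ([seq ((lambda k) *i)%C | k <- index_enum 'I_r] ++
    [seq - ((lambda k) *i)%C | k <- index_enum 'I_r]).
have prodS (K' : comNzRingType) (F : R[i] -> K') : \prod_(x <- s0) F x =
    F 0 ^+ (d - 2 * r) * (\prod_(k < r) F ((lambda k) *i)%C * \prod_(k < r) F (- ((lambda k) *i)%C)).
  by rewrite !big_cat !big_map prod_const_ord.
have pe : perm_eq [seq T i i | i <- index_enum 'I_d] s0.
  apply: prod_XsubC_eq; rewrite big_map hcharT prodS /C hchar.
  rewrite polyC0 subr0 big_split /=; congr (_ * _); congr (_ * _).
  by apply: eq_bigr => k _; rewrite polyCN opprK.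
rewrite detO -(big_map (fun i : 'I_d => T i i) xpredT h) (perm_big _ pe) prodS.
have m0 : (0 < m)%N by apply: leq_trans m2.
pose g k := ((1 + lambda k) ^+ m - (1 - lambda k) ^+ m) / (2 * lambda k).
have h0 : h 0 = m%:R.
  by rewrite /h mulr0 subr0 addr0 Hs11 prednK.
have ln0 k : lambda k != 0 by rewrite gt_eqF.
have gE1 k : Hs (1 - lambda k) (1 + lambda k) m.-1 = g k.
  have := Hs_closed (1 - lambda k) (1 + lambda k) m.-1; rewrite prednK // /g => <-.
  by field; exact: ln0.
have gE2 k : Hs (1 + lambda k) (1 - lambda k) m.-1 = g k.
  have := Hs_closed (1 + lambda k) (1 - lambda k) m.-1; rewrite prednK // /g => e.
  have -> : (1 + lambda k) ^+ m - (1 - lambda k) ^+ m =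
    - ((1 - lambda k) ^+ m - (1 + lambda k) ^+ m) by rewrite opprB.
  by rewrite -e; field; exact: ln0.
have hp k : h ((lambda k) *i)%C = (g k)%:C%C.
  rewrite /h.
  have -> : 'i%C * ((lambda k) *i)%C = (- lambda k)%:C%C by simpc.
  by rewrite -rmorphD -rmorphB -Hs_rmorph opprK gE1.
have hn k : h (- ((lambda k) *i))%C = (g k)%:C%C.
  rewrite /h.
  have -> : 'i%C * (- ((lambda k) *i))%C = (lambda k)%:C%C by simpc.
  by rewrite -rmorphD -rmorphB -Hs_rmorph gE2.
rewrite h0 (eq_bigr _ (fun k _ => hp k)) (eq_bigr _ (fun k _ => hn k)).
have gge k : 0 <= g k.
  rewrite /g; apply: divr_ge0; last by rewrite mulr_ge0 ?ler0n ?ltW.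
  rewrite subr_ge0.
  apply: le_trans (ler_norm _) _; rewrite normrX lerXn2r ?nnegrE ?normr_ge0 //.
    by rewrite addr_ge0 ?ltW.
  by apply: le_trans (ler_normB _ _) _; rewrite normr1 gtr0_norm.
have -> : \prod_(k < r) (((1 + lambda k) ^+ m - (1 - lambda k) ^+ m) / (2 * lambda k))
   = \prod_(k < r) g k by [].
set y := (Num.sqrt (m%:R : R)) ^+ (d - 2 * r) * \prod_(k < r) g k.
have y0 : 0 <= y by rewrite /y mulr_ge0 ?exprn_ge0 ?sqrtr_ge0 // prodr_ge0.
rewrite -(@sqrCK _ (y%:C)%C); last by rewrite ler0c.
congr sqrtC.
have yE : (m%:R : R) ^+ (d - 2 * r) * (\prod_(k < r) g k * \prod_(k < r) g k) = y ^+ 2.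
  by rewrite /y exprMn -exprM [(_ * 2)%N]mulnC exprM sqr_sqrtr ?ler0n // expr2.
by apply: esym; rewrite -rmorphXn -yE rmorphM rmorphXn rmorph_nat rmorphM !rmorph_prod.
Qed.
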